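(* Assume $\nu_0\ge 2$. The sets $\mathcal{V}_i^1$, $i\in[1,\nu_0]$, are pairwise disjoint cycles contained in $\overline{\Omega}$. Moreover, for each $i$, the bottom of $\mathcal{V}_i^1$ is $\mathcal{F}(\mathcal{V}_i^1)=\mathcal{P}_i^1$, and its depth is $\Gamma^{\mathcal{V}_i^1}=\Gamma_i^1$.
   Context: Let $\Omega$ be a finite set equipped with a connected undirected graph structure; write $\eta\sim\xi$ if $\{\eta,\xi\}$ is an edge. Let $\mathbb{H}:\Omega\to\mathbb{R}$ be a function. A path $\omega:\eta\to\xi$ is a sequence $\omega=(\omega_n)_{n=0}^N$ with $\omega_0=\eta$, $\omega_N=\xi$ and $\omega_n\sim\omega_{n+1}$ for all $n$; $N=0$ is allowed. Its height is $\Phi_\omega:=\max_{0\le n\le N}\mathbb{H}(\omega_n)$. The communication height is $\Phi(\eta,\xi):=\min_{\omega:\eta\to\xi}\Phi_\omega$. For nonempty sets $\mathcal{A},\mathcal{B}$, write $\Phi(\mathcal{A},\mathcal{B}):=\min_{\eta\in\mathcal{A},\xi\in\mathcal{B}}\Phi(\eta,\xi)$ and $\Phi(\mathcal{A},\eta):=\Phi(\mathcal{A},\{\eta\})$. Let $\mathcal{S}:=\operatorname{argmin}_\Omega\mathbb{H}$ be the set of ground states. Define $\overline{\Phi}:=\max_{s,s'\in\mathcal{S}}\Phi(s,s')$ and $\overline{\Omega}:=\{\eta\in\Omega:\Phi(\mathcal{S},\eta)\le\overline{\Phi}\}$. For $\mathcal{A}\subseteq\Omega$, define $\mathcal{F}(\mathcal{A}):=\operatorname{argmin}_{\mathcal{A}}\mathbb{H}$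 and $\partial\mathcal{A}:=\{\eta\notin\mathcal{A}:\eta\sim\xi\text{ for some }\xi\in\mathcal{A}\}$. A set $\mathcal{A}$ is connected if any two of its points are joined by a path lying inside $\mathcal{A}$. A stable plateau is a nonempty connected set $\mathcal{P}$ on which $\mathbb{H}$ is constant, with value $\mathbb{H}(\mathcal{P})$, such that $\mathbb{H}(\zeta)>\mathbb{H}(\mathcal{P})$ for all $\zeta\in\partial\mathcal{P}$. A cycle is a nonempty connected set $\mathcal{C}$ with $\max_{\mathcal{C}}\mathbb{H}<\min_{\partial\mathcal{C}}\mathbb{H}$. Its depth is $\Gamma^{\mathcal{C}}:=\min_{\partial\mathcal{C}}\mathbb{H}-\min_{\mathcal{C}}\mathbb{H}$. Let $\mathscr{P}^1=\{\mathcal{P}_1^1,\dots,\mathcal{P}_{\nu_0}^1\}$ be the collection of all stable plateaux contained in $\overline{\Omega}$. For $i\in[1,\nu_0]$, set $\breve{\mathcal{P}}_i^1:=\bigcup_{j\ne i}\mathcal{P}_j^1$. Define the initial depth $\Gamma_i^1:=\Phi(\mathcal{P}_i^1,\breve{\mathcal{P}}_i^1)-\mathbb{H}(\mathcal{P}_i^1)$ and the set $\mathcal{V}_i^1:=\{\eta\in\Omega:\Phi(\mathcal{P}_i^1,\eta)-\mathbb{H}(\mathcal{P}_i^1)<\Gamma_i^1\}$. Here $[a,b]$ denotes the set of integers from $a$ to $b$. *)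

(* Defs.v *)
From mathcomp Require Import all_boot all_order all_algebra.
From mathcomp Require Import boolp classical_sets reals.
Set Implicit Arguments. Unset Strict Implicit. Unset Printing Implicit Defensive.
Import Order.TTheory GRing.Theory Num.Theory.
Local Open Scope classical_set_scope.
Local Open Scope ring_scope.

Section Energy.
Variables (R : realType) (Omega : finType) (e : rel Omega) (H : Omega -> R).

Definition minR (S : set R) : R := xget 0 [set m | S m /\ forall s, S s -> m <= s].
Definition maxR (S : set R) : R := xget 0 [set m | S m /\ forall s, S s -> s <= m].

(* a path from x to y is the sequence x :: p with consecutive vertices adjacent *)
Definition is_path (x y : Omega) (p : seq Omega) : Prop :=
  path e x p /\ last x p = y.

Definition path_height (x : Omega) (p : seq Omega) : R :=
  \big[Num.max/H x]_(z <- p) H z.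

Definition comm_height (x y : Omega) : R :=
  minR [set path_height x p | p in [set p | is_path x y p]].

Definition comm_height_set (A B : set Omega) : R :=
  minR [set c | exists a b, A a /\ B b /\ c = comm_height a b].

Definition ground_states : set Omega := [set s | forall z, H s <= H z].

Definition Phibar : R :=
  maxR [set c | exists s s', ground_states s /\ ground_states s' /\ c = comm_height s s'].

Definition Omegabar : set Omega :=
  [set z | comm_height_set ground_states [set z] <= Phibar].

Definition bottom (A : set Omega) : set Omega :=
  [set z | A z /\ forall y, A y -> H z <= H y].

Definition boundary (A : set Omega) : set Omega :=
  [set z | ~ A z /\ exists y, A y /\ e z y].

Definition connected_set (A : set Omega) : Prop :=
  forall x y, A x -> A y -> exists p, is_path x y p /\ forall z, z \in x :: p -> A z.

Definition stable_plateau (P : set Omega) : Prop :=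
  P !=set0 /\ connected_set P /\
  exists c, (forall x, P x -> H x = c) /\ (forall z, boundary P z -> c < H z).

(* the (constant) value H(P) of H on P *)
Definition valH (P : set Omega) : R := xget 0 (H @` P).

(* max_C H < min_{dC} H  (vacuous if the boundary is empty, i.e. min = +oo) *)
Definition is_cycle (C : set Omega) : Prop :=
  C !=set0 /\ connected_set C /\
  forall x z, C x -> boundary C z -> H x < H z.

Definition depth (C : set Omega) : R :=
  minR (H @` boundary C) - minR (H @` C).

Definition plateaux1 (P : set Omega) : Prop := stable_plateau P /\ P `<=` Omegabar.

Definition breve (P : set Omega) : set Omega :=
  [set z | exists Q, plateaux1 Q /\ Q <> P /\ Q z].

Definition Gamma1 (P : set Omega) : R :=
  comm_height_set P (breve P) - valH P.

Definition V1 (P : set Omega) : set Omega :=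
  [set z | comm_height_set P [set z] - valH P < Gamma1 P].

End Energy.

(* Main.v *)
Require Import Defs.
From mathcomp Require Import all_boot all_order all_algebra.
From mathcomp Require Import boolp classical_sets reals.
Import Order.TTheory GRing.Theory Num.Theory.
Set Implicit Arguments. Unset Strict Implicit. Unset Printing Implicit Defensive.
Local Open Scope classical_set_scope.
Local Open Scope ring_scope.

Section Aux.
Variables (R : realType) (Omega : finType) (e : rel Omega) (H : Omega -> R).
Hypothesis e_sym : symmetric e.
Hypothesis e_conn : forall x y : Omega, exists p, is_path e x y p.

Lemma fin_min (S : set R) : (exists s, S s) -> (forall s, S s -> exists w, H w = s) ->
  exists m, S m /\ forall s, S s -> m <= s.
Proof.
case=> s0 S0 HS; have [w0 Hw0] := HS _ S0.
pose P := fun w => `[< S (H w) >].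
have Pw0 : P w0 by apply/asboolP; rewrite Hw0.
case: (arg_minP H Pw0) => w /asboolP Sw Hmin.
exists (H w); split=> // s Ss; have [w' Hw'] := HS _ Ss.
rewrite -Hw'; apply: Hmin; apply/asboolP; rewrite Hw'.
exact: Ss.
Qed.

Lemma fin_max (S : set R) : (exists s, S s) -> (forall s, S s -> exists w, H w = s) ->
  exists m, S m /\ forall s, S s -> s <= m.
Proof.
case=> s0 S0 HS; have [w0 Hw0] := HS _ S0.
pose P := fun w => `[< S (H w) >].
have Pw0 : P w0 by apply/asboolP; rewrite Hw0.
case: (arg_maxP H Pw0) => w /asboolP Sw Hmax.
exists (H w); split=> // s Ss; have [w' Hw'] := HS _ Ss.
rewrite -Hw'; apply: Hmax; apply/asboolP; rewrite Hw'.
exact: Ss.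
Qed.

Lemma minR_eq (S : set R) m : S m -> (forall s, S s -> m <= s) -> minR S = m.
Proof.
move=> Sm Hm; rewrite /minR.
have [] : [set m | S m /\ forall s, S s -> m <= s] (xget 0 [set m | S m /\ forall s, S s -> m <= s]).
  by apply: xgetPex; exists m.
move=> S1 H1; apply/le_anti; rewrite H1 //= Hm //.
Qed.

Lemma minR_spec (S : set R) : (exists s, S s) -> (forall s, S s -> exists w, H w = s) ->
  S (minR S) /\ forall s, S s -> minR S <= s.
Proof.
move=> S0 HS; have [m [Sm Hm]] := fin_min S0 HS.
by rewrite (minR_eq Sm Hm).
Qed.

Lemma maxR_spec (S : set R) : (exists s, S s) -> (forall s, S s -> exists w, H w = s) ->
  S (maxR S) /\ forall s, S s -> s <= maxR S.
Proof.
move=> S0 HS; have [m [Sm Hm]] := fin_max S0 HS.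
rewrite /maxR.
have [] : [set m | S m /\ forall s, S s -> s <= m] (xget 0 [set m | S m /\ forall s, S s -> s <= m]).
  by apply: xgetPex; exists m.
by [].
Qed.

Lemma ph_le x p d : (path_height H x p <= d) = all (fun w => H w <= d) (x :: p).
Proof.
elim: p => [|z p IH]; first by rewrite /path_height big_nil /= andbT.
rewrite /path_height big_cons ge_max -/(path_height H x p) IH /=.
by rewrite andbCA.
Qed.

Lemma ph_leP x p d : path_height H x p <= d <-> forall w, w \in x :: p -> H w <= d.
Proof. by rewrite ph_le; split => [/allP|?]; last apply/allP. Qed.

Lemma ph_mem x p : exists w, w \in x :: p /\ H w = path_height H x p.
Proof.
elim: p => [|z p [w [wp Hw]]]; first by exists x; rewrite /path_height big_nil mem_head.
rewrite /path_height big_cons -/(path_height H x p) -Hw.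
case: (leP (H z) (H w)) => hzw.
- exists w; split; first by move: wp; rewrite !inE => /orP [->|->]; rewrite ?orbT.
  by rewrite ?max_r.
- exists z; split; first by rewrite !inE eqxx orbT.
  by rewrite ?max_l // ltW.
Qed.


Definition reach (A : set Omega) x y :=
  exists p, is_path e x y p /\ forall w, w \in x :: p -> A w.

Lemma reach_refl (A : set Omega) x : A x -> reach A x x.
Proof.
move=> Ax; exists [::]; split; first by [].
by move=> w; rewrite inE => /eqP ->.
Qed.

Lemma reach_in (A : set Omega) x y : reach A x y -> A x /\ A y.
Proof.
case=> p [[_ <-] Hp]; split; first by apply: Hp; rewrite mem_head.
by apply: Hp; exact: mem_last.
Qed.

Lemma reach_trans (A : set Omega) x y z : reach A x y -> reach A y z -> reach A x z.
Proof.
case=> p [[pp lp] Hp] [q [[pq lq] Hq]]; exists (p ++ q); split.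
  by split; rewrite ?cat_path ?last_cat lp ?pp ?pq.
move=> w; rewrite in_cons mem_cat => /orP [/eqP->|/orP [wp|wq]].
- by apply: Hp; rewrite mem_head.
- by apply: Hp; rewrite in_cons wp orbT.
- by apply: Hq; rewrite in_cons wq orbT.
Qed.

Lemma reach_sym (A : set Omega) x y : reach A x y -> reach A y x.
Proof.
case=> p [[pp lp] Hp].
have E : y :: rev (belast x p) = rev (x :: p) by rewrite [x :: p]lastI rev_rcons lp.
exists (rev (belast x p)); split.
  split.
    have ee : (fun z : Omega => e^~ z) =2 e by move=> a b /=; rewrite e_sym.
    by rewrite -lp rev_path (eq_path ee).
  rewrite -[last y _]/(last y (y :: rev (belast x p))) E rev_cons.
  by rewrite last_rcons.
by move=> w; rewrite E mem_rev; apply: Hp.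
Qed.

Lemma reach_edge (A : set Omega) x y z : reach A x y -> A z -> e y z -> reach A x z.
Proof.
move=> rxy Az eyz; apply: (reach_trans rxy); exists [:: z]; split.
  by split => //=; rewrite eyz.
have [_ Ay] := reach_in rxy.
by move=> w; rewrite !inE => /orP [/eqP->|/eqP->].
Qed.

Lemma path_prefix x y p w : is_path e x y p -> w \in x :: p ->
  exists q, is_path e x w q /\ forall u, u \in x :: q -> u \in x :: p.
Proof.
elim: p x => [|z p IH] x [pp lp].
  by rewrite inE => /eqP ->; exists [::]; split.
rewrite in_cons => /orP [/eqP ->|wp].
  by exists [::]; split => // u; rewrite inE => /eqP ->; rewrite mem_head.
move: pp => /= /andP [exz pzp].
have [q [[pq lq] Hq]] := IH z (conj pzp lp) wp.
exists (z :: q); split; first by split => //=; rewrite exz pq.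
move=> u; rewrite in_cons => /orP [/eqP ->|uq]; first by rewrite mem_head.
by rewrite in_cons (Hq u uq) orbT.
Qed.

Lemma reach_strengthen (A B : set Omega) x y :
  reach A x y -> (forall w, reach A x w -> B w) -> reach B x y.
Proof.
case=> p [pp Hp] HB; exists p; split => // w wp.
have [q [pq Hq]] := path_prefix pp wp.
by apply: HB; exists q; split => // u /Hq; apply: Hp.
Qed.

Lemma reach_mono (A B : set Omega) x y : A `<=` B -> reach A x y -> reach B x y.
Proof. by move=> AB [p [pp Hp]]; exists p; split => // w /Hp /AB. Qed.

Lemma reach_exit (A B : set Omega) x y : reach A x y -> B x -> ~ B y ->
  exists u v, B u /\ ~ B v /\ e u v /\ A v.
Proof.
case=> p [[pp lp] Hp]; elim: p x pp lp Hp => [|z p IH] x pp lp Hp Bx nBy.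
  by move: lp => /= lp; rewrite lp in Bx.
move: pp => /= /andP [exz pzp].
have Az : A z by apply: Hp; rewrite !inE eqxx orbT.
have [Bz|nBz] := pselect (B z); last by exists x, z.
apply: (IH z pzp lp) => // w wp; apply: Hp; by rewrite in_cons wp orbT.
Qed.


Notation Phi := (comm_height e H).

Lemma Phi_spec x y : exists p, is_path e x y p /\ path_height H x p = Phi x y /\
  forall q, is_path e x y q -> Phi x y <= path_height H x q.
Proof.
have [] := @minR_spec [set path_height H x p | p in [set p | is_path e x y p]].
- by have [p pp] := e_conn x y; exists (path_height H x p), p.
- by move=> s [p _ <-]; have [w [_ Hw]] := ph_mem x p; exists w.
move=> [p pp Hp] Hm; exists p; split => //; split => // q pq.
by apply: Hm; exists q.
Qed.

Lemma Phi_le x y d : reach [set w | H w <= d] x y -> Phi x y <= d.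
Proof.
case=> p [pp Hp]; have [_ [_ [_ Hm]]] := Phi_spec x y.
by apply: le_trans (Hm _ pp) _; apply/ph_leP.
Qed.

Lemma Phi_path x y : reach [set w | H w <= Phi x y] x y.
Proof.
have [p [pp [Hph _]]] := Phi_spec x y; exists p; split => // w wp.
by move: w wp; apply/ph_leP; rewrite Hph.
Qed.

Lemma Phi_ge x y : H x <= Phi x y /\ H y <= Phi x y.
Proof. exact: reach_in (Phi_path x y). Qed.

Lemma Phi_trans x y z : Phi x z <= Num.max (Phi x y) (Phi y z).
Proof.
apply: Phi_le; apply: (@reach_trans _ x y z).
  by apply: reach_mono (Phi_path x y) => w /= h; rewrite le_max h.
by apply: reach_mono (Phi_path y z) => w /= h; rewrite le_max h orbT.
Qed.

Lemma Phi_sym x y : Phi x y = Phi y x.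
Proof.
by apply/le_anti; rewrite !Phi_le //; apply: reach_sym; apply: Phi_path.
Qed.

Lemma Phi_edge x y : e x y -> Phi x y <= Num.max (H x) (H y).
Proof.
move=> exy; apply: Phi_le; apply: (reach_edge (y := x)) => //=.
  by apply: reach_refl; rewrite /= le_max lexx.
by rewrite le_max lexx orbT.
Qed.

Lemma Phi_refl x : Phi x x <= H x.
Proof. by apply: Phi_le; apply: reach_refl => /=. Qed.

Lemma Phi_range x y : exists w, H w = Phi x y.
Proof.
have [p [_ [<- _]]] := Phi_spec x y; have [w [_ Hw]] := ph_mem x p.
by exists w.
Qed.

Lemma PhiS_spec (A B : set Omega) a0 b0 : A a0 -> B b0 ->
  exists a b, A a /\ B b /\ comm_height_set e H A B = Phi a b /\
  forall a' b', A a' -> B b' -> comm_height_set e H A B <= Phi a' b'.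
Proof.
move=> Aa0 Bb0.
have [] := @minR_spec [set c | exists a b, A a /\ B b /\ c = Phi a b].
- by exists (Phi a0 b0), a0, b0.
- by move=> s [a [b [_ [_ ->]]]]; apply: Phi_range.
move=> [a [b [Aa [Bb E]]]] Hm; exists a, b; split => //; split => //; split => //.
by move=> a' b' Aa' Bb'; apply: Hm; exists a', b'.
Qed.


Lemma plateau_val P : stable_plateau e H P -> exists hP,
  [/\ (forall x, P x -> H x = hP), (forall z, boundary e P z -> hP < H z),
      valH H P = hP & exists x, P x].
Proof.
case=> [[x0 Px0] [_ [hP [Hc Hb]]]]; exists hP; split => //; last by exists x0.
have : (H @` P) (xget 0 (H @` P)) by apply: xgetPex; exists (H x0), x0.
by case=> x Px E; rewrite /valH -E; apply: Hc.
Qed.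

Lemma plateau_exit P hP x y : (forall z, boundary e P z -> hP < H z) ->
  P x -> ~ P y -> hP < Phi x y.
Proof.
move=> Hb Px nPy; have [u [v [Pu [nPv [euv Hv]]]]] := reach_exit (Phi_path x y) Px nPy.
apply: (lt_le_trans _ Hv); apply: Hb; split => //; exists u; split => //.
by rewrite e_sym.
Qed.

Lemma plateau_sub P Q z : stable_plateau e H P -> stable_plateau e H Q ->
  P z -> Q z -> Q `<=` P.
Proof.
move=> sP sQ Pz Qz w Qw.
have [hP [HP HPb _ _]] := plateau_val sP; have [hQ [HQ _ _ _]] := plateau_val sQ.
apply: contrapT => nPw.
have rzw : reach Q z w by case: sQ => _ [Qc _]; apply: Qc.
have [u [v [Pu [nPv [euv Qv]]]]] := reach_exit rzw Pz nPw.
have : hP < H v by apply: HPb; split => //; exists u; split => //; rewrite e_sym.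
by rewrite (HQ v Qv) -(HQ z Qz) (HP z Pz) ltxx.
Qed.

Lemma plateau_disj P Q z : stable_plateau e H P -> stable_plateau e H Q ->
  P z -> Q z -> P = Q.
Proof.
move=> sP sQ Pz Qz; apply/seteqP; split.
  exact: plateau_sub sQ sP Qz Pz.
exact: plateau_sub sP sQ Pz Qz.
Qed.

Lemma V1_iff P z : (exists a, P a) ->
  V1 e H P z <-> exists a, P a /\ Phi a z < comm_height_set e H P (breve e H P).
Proof.
move=> [a0 Pa0]; rewrite /V1 /Gamma1 /= ltrD2r.
have [a [b [Pa [/= -> [E Hm]]]]] := @PhiS_spec P [set z] a0 z Pa0 erefl.
rewrite E; split; first by move=> h; exists a.
by case=> a' [Pa' h]; apply: le_lt_trans h; rewrite -E; apply: Hm.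
Qed.


Lemma ground_ex (x0 : Omega) : exists s, ground_states H s.
Proof.
have [] := @fin_min [set r | exists w, H w = r].
- by exists (H x0), x0.
- by move=> s [w <-]; exists w.
move=> m [[s <-] Hm]; exists s => z; apply: Hm; by exists z.
Qed.

Lemma Omegabar_ex (q : Omega) : Omegabar e H q ->
  exists s, ground_states H s /\ Phi s q <= Phibar e H.
Proof.
rewrite /Omegabar /= => hq; have [s0 gs0] := ground_ex q.
have [s [b [gs [/= -> [E _]]]]] := @PhiS_spec (ground_states H) [set q] s0 q gs0 erefl.
by exists s; split => //; rewrite -E.
Qed.

Lemma Omegabar_in (q s : Omega) : ground_states H s -> Phi s q <= Phibar e H ->
  Omegabar e H q.
Proof.
move=> gs h; rewrite /Omegabar /=.
have [a [b [_ [_ [_ Hm]]]]] := @PhiS_spec (ground_states H) [set q] s q gs erefl.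
by apply: le_trans h; apply: Hm.
Qed.

Lemma Phibar_ge s s' : ground_states H s -> ground_states H s' -> Phi s s' <= Phibar e H.
Proof.
move=> gs gs'; have [] := @maxR_spec [set c | exists s s', ground_states H s /\
   ground_states H s' /\ c = Phi s s'].
- by exists (Phi s s'), s, s'.
- by move=> c [a [b [_ [_ ->]]]]; apply: Phi_range.
by move=> _ Hm; apply: Hm; exists s, s'.
Qed.

Lemma Omegabar_Phi a b : Omegabar e H a -> Omegabar e H b -> Phi a b <= Phibar e H.
Proof.
move=> /Omegabar_ex [s [gs hs]] /Omegabar_ex [s' [gs' hs']].
apply: le_trans (Phi_trans a s b) _; rewrite ge_max Phi_sym hs /=.
apply: le_trans (Phi_trans s s' b) _; rewrite ge_max hs' Phibar_ge //.
Qed.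


Lemma main_one P : plateaux1 e H P -> (exists b, breve e H P b) ->
     is_cycle e H (V1 e H P) /\ V1 e H P `<=` Omegabar e H /\
     bottom H (V1 e H P) = P /\ depth e H (V1 e H P) = Gamma1 e H P.
Proof.
move=> pP [b0 Bb0]; have [sP PO] := pP.
have [hP [HPc HPb valP [x0 Px0]]] := plateau_val sP.
have Pconn : forall x y, P x -> P y -> reach P x y by case: sP => _ [].
set B := breve e H P in Bb0 *.
set c := comm_height_set e H P B.
set V := V1 e H P.
have [a [b [Pa [Bb [cE cmin]]]]] := PhiS_spec Px0 Bb0.
change (c = Phi a b) in cE.
change (forall a' b', P a' -> B b' -> c <= Phi a' b') in cmin.
have BnP : forall y, B y -> ~ P y.
  move=> y [Q [[sQ _] [QP Qy]]] Py; apply: QP; exact: plateau_disj sQ sP Qy Py.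
have hPc : hP < c by rewrite cE; apply: plateau_exit HPb Pa (BnP _ Bb).
have Vd : forall z, V z <-> exists a, P a /\ Phi a z < c.
  by move=> z; apply: V1_iff; exists x0.
have PV : forall x, P x -> V x.
  move=> x Px; apply/Vd; exists x; split => //.
  by apply: le_lt_trans (Phi_refl x) _; rewrite HPc.
have BnV : forall y, B y -> ~ V y.
  by move=> y By /Vd [a' [Pa' h]]; have := cmin _ _ Pa' By; rewrite leNgt h.
have Vlt : forall z, V z -> H z < c.
  by move=> z /Vd [a' [_ h]]; apply: le_lt_trans h; case: (Phi_ge a' z).
have dV : forall w, boundary e V w -> c <= H w.
  move=> w [nVw [y [Vy ewy]]]; rewrite leNgt; apply/negP => hw; apply: nVw.
  have /Vd [a' [Pa' hy]] := Vy; apply/Vd; exists a'; split => //.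
  apply: le_lt_trans (Phi_trans a' y w) _; rewrite gt_max hy /=.
  apply: le_lt_trans (Phi_edge _) _; first by rewrite e_sym.
  by rewrite gt_max hw Vlt.
have Vconn : forall x y, V x -> V y -> reach V x y.
  have rV : forall x, V x -> exists a', P a' /\ reach V a' x.
    move=> x /Vd [a' [Pa' h]]; exists a'; split => //.
    apply: (reach_strengthen (Phi_path a' x)) => w /Phi_le hw.
    by apply/Vd; exists a'; split => //; apply: le_lt_trans h.
  move=> x y /rV [a1 [Pa1 r1]] /rV [a2 [Pa2 r2]].
  apply: reach_trans (reach_sym r1) _; apply: reach_trans r2.
  by apply: reach_mono (Pconn _ _ Pa1 Pa2).
have cbar : c <= Phibar e H.
  rewrite cE; apply: Omegabar_Phi; first exact: PO.
  by case: Bb => Q [[_ QO] [_ Qb]]; apply: QO.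
have VO : V `<=` Omegabar e H.
  move=> z /Vd [a' [Pa' h]]; have [s [gs hs]] := Omegabar_ex (PO _ Pa').
  apply: (Omegabar_in gs); apply: le_trans (Phi_trans s a' z) _.
  by rewrite ge_max hs /= (le_trans (ltW h)).
have minP : forall z, V z -> (forall y, V y -> H z <= H y) -> P z.
  move=> z Vz zmin; apply: contrapT => nPz.
  pose A := [set u | V u /\ H u = H z].
  pose L := reach A z.
  have Lz : L z by apply: reach_refl.
  have pL : plateaux1 e H L.
    split; last by move=> w Lw; have [_ [Vw _]] := reach_in Lw; apply: VO.
    split; first by exists z.
    split.
      move=> x y Lx Ly; apply: (@reach_strengthen A).
        exact: reach_trans (reach_sym Lx) Ly.
      by move=> w rxw; apply: reach_trans Lx rxw.
    exists (H z); split; first by move=> x Lx; have [_ [_ ->]] := reach_in Lx.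
    move=> w [nLw [y [Ly ewy]]]; have [_ [Vy Hy]] := reach_in Ly.
    have [Vw|nVw] := pselect (V w).
      have := zmin _ Vw; rewrite le_eqVlt => /orP [/eqP Hzw|//].
      exfalso; apply: nLw; apply: (reach_edge Ly) => //; last by rewrite e_sym.
    apply: lt_le_trans (Vlt _ Vz) _; apply: dV; split => //.
    by exists y; split.
  have : B z by exists L; split => //; split => // LP; apply: nPz; rewrite -LP.
  by move/BnV.
have [zm Vzm zmmin] : exists2 zm, V zm & forall y, V y -> H zm <= H y.
  have [] := @fin_min (H @` V).
  - by exists (H x0), x0 => //; apply: PV.
  - by move=> s [w _ <-]; exists w.
  move=> m [[zm Vzm <-] Hm]; exists zm => // y Vy; apply: Hm; by exists y.
have Vge : forall y, V y -> hP <= H y.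
  by move=> y Vy; rewrite -(HPc _ (minP _ Vzm zmmin)); apply: zmmin.
have botE : bottom H V = P.
  apply/seteqP; split.
    by move=> z [Vz zmin]; apply: minP.
  move=> z Pz; split; first exact: PV.
  by move=> y Vy; rewrite HPc //; apply: Vge.
split.
  split; first by exists x0; apply: PV.
  split; first exact: Vconn.
  by move=> x w Vx dw; apply: lt_le_trans (Vlt _ Vx) (dV _ dw).
split => //; split => //.
rewrite /depth /Gamma1 -/B -/c valP.
have -> : minR (H @` V) = hP.
  apply: minR_eq; first by exists x0 => //; [apply: PV | apply: HPc].
  by move=> s [y Vy <-]; apply: Vge.
have -> : minR (H @` boundary e V) = c => //.
have [u [v [Vu [nVv [euv Hv]]]]] := reach_exit (Phi_path a b) (PV _ Pa) (BnV _ Bb).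
have dv : boundary e V v by split => //; exists u; split => //; rewrite e_sym.
apply: minR_eq.
  exists v => //; apply/le_anti; rewrite dV // andbT; rewrite cE; exact: Hv.
by move=> s [w dw <-]; apply: dV.
Qed.


Lemma disj_VV P Q : plateaux1 e H P -> plateaux1 e H Q -> P <> Q ->
  V1 e H P `&` V1 e H Q = set0.
Proof.
move=> pP pQ PQ.
have [_ [_ _ _ [p0 Pp0]]] := plateau_val pP.1.
have [_ [_ _ _ [q0 Qq0]]] := plateau_val pQ.1.
have QB : forall y, Q y -> breve e H P y by move=> y Qy; exists Q; split => //; split => // /esym.
have PB : forall y, P y -> breve e H Q y by move=> y Py; exists P.
have [_ [_ [_ [_ [_ cPm]]]]] := PhiS_spec Pp0 (QB _ Qq0).
have [_ [_ [_ [_ [_ cQm]]]]] := PhiS_spec Qq0 (PB _ Pp0).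
rewrite -subset0 => z [/(V1_iff _ (ex_intro _ _ Pp0)) [a [Pa ha]]
                       /(V1_iff _ (ex_intro _ _ Qq0)) [b [Qb hb]]].
have h1 := le_trans (cPm _ _ Pa (QB _ Qb)) (Phi_trans a z b).
have h2 := le_trans (cQm _ _ Qb (PB _ Pa)) (Phi_trans b z a).
rewrite (Phi_sym z b) le_max in h1; rewrite (Phi_sym z a) le_max in h2.
set u := Phi a z in ha h1 h2; set v := Phi b z in hb h1 h2.
set cP := comm_height_set e H P _ in ha h1; set cQ := comm_height_set e H Q _ in hb h2.
case/orP: h1 => h1; first by move: (lt_le_trans ha h1); rewrite ltxx.
case/orP: h2 => h2; first by rewrite ltNge h2 in hb.
have := lt_trans (lt_le_trans hb h2) ha; by rewrite ltNge h1.
Qed.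

End Aux.

Unset Implicit Arguments.
Theorem mainTheorem2 (R : realType) (Omega : finType) (e : rel Omega)
    (H : Omega -> R)
    (e_sym : symmetric e)
    (e_conn : forall x y : Omega, exists p, is_path e x y p)
    (nu0_ge2 : exists P Q, plateaux1 e H P /\ plateaux1 e H Q /\ P <> Q) :
  (forall P, plateaux1 e H P ->
     is_cycle e H (V1 e H P) /\ V1 e H P `<=` Omegabar e H /\
     bottom H (V1 e H P) = P /\ depth e H (V1 e H P) = Gamma1 e H P) /\
  (forall P Q, plateaux1 e H P -> plateaux1 e H Q -> P <> Q ->
     V1 e H P `&` V1 e H Q = set0).
Proof.
split; last exact: disj_VV.
move=> P pP; apply: main_one => //.
case: nu0_ge2 => [P1 [Q1 [p1 [q1 PQ]]]].
have [P1P|P1P] := pselect (P1 = P).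
  have [_ [_ _ _ [q0 Qq0]]] := plateau_val q1.1.
  by exists q0, Q1; split => //; split => // QP; apply: PQ; rewrite P1P QP.
have [_ [_ _ _ [p0 Pp0]]] := plateau_val p1.1.
by exists p0, P1.
Qed.
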